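(* Let $N\ge 0$ be an integer, let $\mathcal{H}_N$ be a complex inner-product space of dimension $N+1$ with orthonormal basis $|\Psi_0\rangle,\dots,|\Psi_N\rangle$, and let $\beta_0,\dots,\beta_{N-1}>0$ be real numbers, with $\beta_N=0$. Let $\hat A$ be the linear operator on $\mathcal{H}_N$ defined by $\hat A|\Psi_0\rangle=0$ and $\hat A|\Psi_{n+1}\rangle=\sqrt{\beta_n}\,|\Psi_n\rangle$ for $0\le n\le N-1$, with adjoint $\hat A^\dagger$ (so $\hat A^\dagger|\Psi_n\rangle=\sqrt{\beta_n}|\Psi_{n+1}\rangle$, $\hat A^\dagger|\Psi_N\rangle=0$). For $0\le n\le N$ define $g^{(0)}_n=1$ and, for $l\ge 1$, $$g^{(l)}_n=\sum_{s_1=0}^{n}\beta_{s_1}\sum_{s_2=0}^{s_1+1}\beta_{s_2}\cdots\sum_{s_l=0}^{s_{l-1}+1}\beta_{s_l},$$ equivalently by the recursion $g^{(l)}_n=\sum_{s=0}^{n}\beta_s\,g^{(l-1)}_{s+1}$ (with $g^{(l-1)}_{N+1}$ multiplying $\beta_N=0$). Then for every real $\tau$, $$e^{-i\tau(\hat A+\hat A^\dagger)}|\Psi_0\rangle=\sum_{n=0}^{N}\gamma_n(\tau)\,(-i\hat A^\dagger)^n|\Psi_0\rangle,\qquad \gamma_n(\tau)=\sum_{l=0}^{\infty}\frac{(-1)^l\,\tau^{n+2l}}{(n+2l)!}\,g^{(l)}_n .$$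
   Context: This describes the time evolution (interaction picture, dimensionless time $\tau$) of the state $|\Psi_0\rangle$ annihilated by the ladder operator $\hat A$, within a finite-dimensional invariant subspace on which the interaction Hamiltonian equals $\hat A+\hat A^\dagger$. Convention: $\beta_s=0$ for $s\ge N$. *)

(* Defs.v *)
From HB Require Import structures.
From mathcomp Require Import all_boot all_order all_algebra.
From mathcomp Require Import complex.
From mathcomp Require Import all_classical all_reals all_analysis.
Set Implicit Arguments. Unset Strict Implicit. Unset Printing Implicit Defensive.
Import Order.TTheory GRing.Theory Num.Theory.
Import numFieldNormedType.Exports.
Local Open Scope ring_scope.
Local Open Scope complex_scope.

Section Defs.
Variable R : realType.
Local Notation C := (R[i]).

Definition betaN (N : nat) (beta : nat -> R) (s : nat) : R :=
  if (s < N)%N then beta s else 0.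

Fixpoint gcoef (N : nat) (beta : nat -> R) (l n : nat) : R :=
  match l with
  | 0 => 1
  | l'.+1 => \sum_(0 <= s < n.+1) betaN N beta s * gcoef N beta l' s.+1
  end.

Definition gamma_term (N : nat) (beta : nat -> R) (n : nat) (tau : R) (l : nat) : R :=
  (-1) ^+ l * tau ^+ (n + 2 * l) / (n + 2 * l)`!%:R * gcoef N beta l n.

Definition gamma (N : nat) (beta : nat -> R) (n : nat) (tau : R) : R :=
  limn (series (gamma_term N beta n tau)).

(* coordinates w.r.t. the orthonormal basis Psi_0..Psi_N of H_N = C^(N+1) *)
Definition Psi (N : nat) (k : 'I_N.+1) : 'cV[C]_N.+1 := delta_mx k 0.

(* ladder operator: A Psi_{n+1} = sqrt(beta_n) Psi_n, A Psi_0 = 0 *)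
Definition ladderA (N : nat) (beta : nat -> R) : 'M[C]_N.+1 :=
  \matrix_(i, j) (if (j == i.+1 :> nat) then (Num.sqrt (betaN N beta i))%:C else 0).

Definition adj (N : nat) (M : 'M[C]_N.+1) : 'M[C]_N.+1 :=
  \matrix_(i, j) (M j i)^*.

Definition expv_partial (N : nat) (H : 'M[C]_N.+1) (tau : R) (v : 'cV[C]_N.+1)
  (m : nat) : 'cV[C]_N.+1 :=
  \sum_(k < m) ((- 'i * tau%:C) ^+ k / k`!%:R) *: (H ^+ k *m v).

End Defs.

(* Main.v *)
Set Warnings "-notation-overridden,-ambiguous-paths,-notation-incompatible-prefix".
Require Import Defs.
From HB Require Import structures.
From mathcomp Require Import all_boot all_order all_algebra.
From mathcomp Require Import complex.
From mathcomp Require Import all_classical all_reals all_analysis.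
From mathcomp Require Import lra zify ring.
Import Order.TTheory GRing.Theory Num.Theory.
Import numFieldNormedType.Exports.
Local Open Scope ring_scope.
Local Open Scope classical_set_scope.
Local Open Scope complex_scope.
Section Alg.
Variable R : realType.
Local Notation C := (R[i]).
Variable N : nat.
Variable beta : nat -> R.
Hypothesis hbeta : forall s : nat, (s < N)%N -> 0 < beta s.

Local Notation bN := (betaN N beta).
Local Notation A := (ladderA N beta).
Local Notation Ad := (adj (ladderA N beta)).

Lemma bN_ge0 s : 0 <= bN s.
Proof. by rewrite /betaN; case: ifP => // /hbeta /ltW. Qed.

Lemma bN_N : bN N = 0.
Proof. by rewrite /betaN ltnn. Qed.

Definition sq (s : nat) : C := (Num.sqrt (bN s))%:C.

Lemma sq_N : sq N = 0.
Proof. by rewrite /sq bN_N sqrtr0. Qed.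

Lemma sq2 s : sq s * sq s = (bN s)%:C.
Proof. by rewrite /sq -rmorphM -expr2 sqr_sqrtr // bN_ge0. Qed.

Definition ev (n : nat) : 'cV[C]_N.+1 := \col_(i < N.+1) ((i == n :> nat)%:R).

Lemma sum_pick K (f : nat -> C) (p : nat) :
  \sum_(j < K) f j * ((j : nat) == p)%:R = if (p < K)%N then f p else 0.
Proof.
elim: K => [|K IH]; first by rewrite big_ord0.
rewrite big_ord_recr /= IH ltnS.
case: (ltngtP p K); rewrite ?mulr0 ?addr0 ?mulr1 ?add0r. all: by [|move=>->].
Qed.

Lemma A_ev n : A *m ev n = if n is n'.+1 then sq n' *: ev n' else 0.
Proof.
apply/matrixP => i j; rewrite !mxE.
pose F := fun k : nat => if k == i.+1 then sq i else 0.
rewrite (eq_bigr (fun k : 'I_N.+1 => F k * ((k : nat) == n)%:R)); last first.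
  by move=> k _; rewrite !mxE.
rewrite sum_pick /F; case: n => [|n] /=; first by rewrite mxE.
rewrite !mxE eqSS.
have [<-|ne] := eqVneq (i : nat) n.
  rewrite mulr1; case: ifP => // /negbT; rewrite -leqNgt => iN.
  have iN' : (i : nat) = N by move: (ltn_ord i) iN; lia.
  by rewrite iN' sq_N.
by rewrite mulr0; case: ifP.
Qed.

Lemma Ad_ev n : Ad *m ev n = sq n *: ev n.+1.
Proof.
apply/matrixP => i j; rewrite !mxE.
pose F := fun k : nat => if (i : nat) == k.+1 then sq k else 0.
rewrite (eq_bigr (fun k : 'I_N.+1 => F k * ((k : nat) == n)%:R)); last first.
  by move=> k _; rewrite !mxE /F; case: ifP => _; rewrite ?conjc_real ?conjc0.
rewrite sum_pick /F; case: ifP => nN; first by case: ifP; rewrite ?mulr1 ?mulr0.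
have [iE|] := eqVneq (i : nat) n.+1; last by rewrite mulr0.
by move: (ltn_ord i) (negbT nN); rewrite iE; lia.
Qed.


Definition w n : 'cV[C]_N.+1 := Ad ^+ n *m ev 0.
Definition cc n : C := \prod_(s < n) sq s.

Lemma w_S n : w n.+1 = Ad *m w n.
Proof. by rewrite /w exprS -mulmxE mulmxA. Qed.

Lemma w_ev n : w n = cc n *: ev n.
Proof.
elim: n => [|n IH]; first by rewrite /w /cc expr0 mul1mx big_ord0 scale1r.
by rewrite w_S IH -scalemxAr Ad_ev scalerA /cc big_ord_recr.
Qed.

Lemma A_w n : A *m w n = if n is n'.+1 then (bN n')%:C *: w n' else 0.
Proof.
rewrite w_ev -scalemxAr A_ev; case: n => [|n]; first by rewrite scaler0.
by rewrite w_ev !scalerA /cc big_ord_recr /= -mulrA sq2 mulrC.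
Qed.

Lemma w_N1 : w N.+1 = 0.
Proof. by rewrite w_ev /cc big_ord_recr /= sq_N mulr0 scale0r. Qed.

Definition Lc (f : nat -> C) : 'cV[C]_N.+1 := \sum_(0 <= n < N.+1) f n *: w n.

Lemma H_L f : (A + Ad) *m Lc f =
  Lc (fun n => (if n is n'.+1 then f n' else 0) + (bN n)%:C * f n.+1).
Proof.
transitivity (Lc (fun n => if n is n'.+1 then f n' else 0) +
   Lc (fun n => (bN n)%:C * f n.+1)); last first.
  by rewrite /Lc -big_split; apply: eq_bigr => n _; exact: (esym (scalerDl _ _ _)).
rewrite /Lc mulmx_sumr.
under eq_bigr do rewrite -scalemxAr mulmxDl A_w -w_S scalerDr.
rewrite big_split /= addrC; congr (_ + _).
  rewrite big_nat_recr //= w_N1 scaler0 addr0.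
  by rewrite [RHS]big_nat_recl //= scale0r add0r.
rewrite big_nat_recl //= scaler0 add0r.
rewrite [RHS]big_nat_recr //= bN_N mul0r scale0r addr0.
by apply: eq_bigr => i _; rewrite scalerA mulrC.
Qed.

Lemma gcoef_S l n : gcoef N beta l.+1 n.+1 =
  gcoef N beta l.+1 n + bN n.+1 * gcoef N beta l n.+2.
Proof. by rewrite /= big_nat_recr. Qed.

Lemma gcoef_0 l : gcoef N beta l.+1 0 = bN 0 * gcoef N beta l 1.
Proof. by rewrite /= big_nat1. Qed.

Definition a (k n : nat) : R :=
  if ((n <= k) && ((k - n) %% 2 == 0))%N then gcoef N beta ((k - n) %/ 2) n else 0.

Lemma a_S k n : a k.+1 n = (if n is n'.+1 then a k n' else 0) + bN n * a k n.+1.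
Proof.
rewrite /a; case: n => [|n].
  rewrite add0r; case: ifP => C1; case: ifP => C2; try (exfalso; lia).
    have [l [E1 E2]] : exists l, ((k.+1 - 0) %/ 2 = l.+1 /\ (k - 1) %/ 2 = l)%N.
      by exists ((k - 1) %/ 2)%N; lia.
    by rewrite E1 E2 gcoef_0.
  by rewrite mulr0.
rewrite subSS ltnS.
case C1: ((n <= k) && ((k - n) %% 2 == 0))%N;
  case C3: ((n.+2 <= k) && ((k - n.+2) %% 2 == 0))%N; try (exfalso; lia).
- have [l [E2 E3]] : exists l, ((k - n) %/ 2 = l.+1 /\ (k - n.+2) %/ 2 = l)%N.
    by exists ((k - n.+2) %/ 2)%N; lia.
  by rewrite E2 E3 gcoef_S.
- have E2 : ((k - n) %/ 2 = 0)%N by lia.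
  by rewrite E2 /= mulr0 addr0.
- by rewrite mulr0 addr0.
Qed.


Lemma HkL k : (A + Ad) ^+ k *m ev 0 = Lc (fun n => (a k n)%:C).
Proof.
elim: k => [|k IH].
  rewrite expr0 mul1mx /Lc big_nat_recl // big1 ?addr0.
    by rewrite /a /= scale1r /w expr0 mul1mx.
  by move=> i _; rewrite /a /= scale0r.
rewrite exprS -mulmxE -mulmxA IH H_L; apply: eq_bigr => n _; congr (_ *: _).
by rewrite a_S rmorphD rmorphM; case: n.
Qed.

Variable tau : R.

Definition idx (n m : nat) : nat := ((m - n + 1) %/ 2)%N.

Lemma coef_sum n m : \sum_(k < m) (((- 'i * tau%:C) ^+ k / k`!%:R) * (a k n)%:C) =
  (- 'i) ^+ n * (series (gamma_term N beta n tau) (idx n m))%:C.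
Proof.
elim: m => [|m IH].
  by rewrite big_ord0 /idx /series /= big_geq // mulr0.
rewrite big_ord_recr /= IH /a.
case C1: ((n <= m) && ((m - n) %% 2 == 0))%N; last first.
  rewrite mulr0 addr0; congr (_ * (series _ _)%:C); rewrite /idx; lia.
have : exists l, (idx n m.+1 = l.+1 /\ idx n m = l /\ (m - n) %/ 2 = l)%N.
  by exists ((m - n) %/ 2)%N; rewrite /idx; lia.
case=> l [E1 [E2 E3]].
have Em : m = (n + 2 * l)%N by lia.
rewrite E1 E2 E3 /series /= big_nat_recr //= rmorphD mulrDr; congr (_ + _).
rewrite /gamma_term -Em Em.
rewrite exprMn exprD exprM sqrrN sqr_i.
rewrite !rmorphM fmorphV rmorph_nat !rmorphXn rmorphN1.
by rewrite !mulrA.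
Qed.


Lemma expv_eq m : expv_partial (A + Ad) tau (ev 0) m =
  \sum_(n < N.+1) (series (gamma_term N beta n tau) (idx n m))%:C *:
     ((- 'i *: Ad) ^+ n *m ev 0).
Proof.
rewrite /expv_partial.
under eq_bigr do rewrite HkL /Lc scaler_sumr.
rewrite exchange_big /= big_mkord; apply: eq_bigr => n _.
under eq_bigr do rewrite scalerA.
rewrite -scaler_suml coef_sum exprZn -scalemxAl scalerA mulrC.
by [].
Qed.


Definition B : R := \sum_(0 <= s < N) bN s.

Lemma B_ge0 : 0 <= B.
Proof. by apply: sumr_ge0 => s _; exact: bN_ge0. Qed.

Lemma gcoef_ge0 l n : 0 <= gcoef N beta l n.
Proof.
elim: l n => [|l IH] n /=; first exact: ler01.
by apply: sumr_ge0 => s _; apply: mulr_ge0; [exact: bN_ge0 | exact: IH].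
Qed.

Lemma sumbN m : \sum_(0 <= s < m) bN s <= B.
Proof.
rewrite /B; have [mN|Nm] := leqP m N.
  rewrite [X in _ <= X](@big_cat_nat _ _ _ m _ _ _ _ (leq0n m) mN) /= lerDl.
  by apply: sumr_ge0 => s _; exact: bN_ge0.
rewrite (@big_cat_nat _ _ _ N _ _ _ _ (leq0n N) (ltnW Nm)) /=.
have -> : \sum_(N <= s < m) bN s = 0.
  by rewrite big_nat_cond big1 // => s /andP[/andP[Ns _] _]; rewrite /betaN ltnNge Ns.
by rewrite addr0.
Qed.

Lemma gcoef_le l n : gcoef N beta l n <= B ^+ l.
Proof.
elim: l n => [|l IH] n /=; first by rewrite expr0.
apply: (@le_trans _ _ (\sum_(0 <= s < n.+1) bN s * B ^+ l)).
  by apply: ler_sum => s _; apply: ler_wpM2l; [exact: bN_ge0 | exact: IH].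
rewrite -big_distrl /= exprS; apply: ler_wpM2r; last exact: sumbN.
by apply: exprn_ge0; exact: B_ge0.
Qed.

Definition z : R := `|tau| * (B + 1).

Lemma z_ge0 : 0 <= z.
Proof. by apply: mulr_ge0 => //; apply: addr_ge0 => //; exact: B_ge0. Qed.

Lemma gt_bound n l : `|gamma_term N beta n tau l| <= exp_coeff z (n + 2 * l)%N.
Proof.
have B1 : 1 <= B + 1 by rewrite lerDr B_ge0.
rewrite /gamma_term /exp_coeff /= !normrM normfV normrX normrN1 expr1n mul1r.
rewrite normr_nat (ger0_norm (gcoef_ge0 _ _)) normrX /z exprMn.
rewrite mulrAC; apply: ler_pM => //; first by rewrite mulr_ge0 ?exprn_ge0 ?gcoef_ge0.
apply: ler_pM => //; rewrite ?exprn_ge0 ?gcoef_ge0 //.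
apply: (le_trans (gcoef_le l n)).
apply: (@le_trans _ _ ((B + 1) ^+ l)).
  by apply: lerXn2r; rewrite ?qualifE /= ?B_ge0 ?(le_trans ler01 B1) ?lerDl ?ler01.
by apply: ler_weXn2l => //; lia.
Qed.

Lemma sub_sum n L :
  \sum_(0 <= l < L) exp_coeff z (n + 2 * l)%N <= \sum_(0 <= k < (n + 2 * L)%N) exp_coeff z k.
Proof.
elim: L => [|L IH].
  by rewrite big_geq // sumr_ge0 // => k _; exact: exp_coeff_ge0 z_ge0.
rewrite big_nat_recr //= (_ : (n + 2 * L.+1 = (n + 2 * L).+2)%N); last by lia.
rewrite !big_nat_recr //= -[X in X <= _]addr0 lerD //; last exact: exp_coeff_ge0 z_ge0.
by rewrite lerD2r.
Qed.

Lemma gamma_cvg n : cvgn (series (gamma_term N beta n tau)).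
Proof.
apply: normed_cvg.
apply: nondecreasing_is_cvgn.
  by apply: nondecreasing_series => k _ _; exact: normr_ge0.
exists (limn (series (exp_coeff z))) => _ [L _ <-].
apply: (@le_trans _ _ (series (exp_coeff z) (n + 2 * L)%N)); last first.
  apply: nondecreasing_cvgn_le; last exact: is_cvg_series_exp_coeff.
  by apply: nondecreasing_series => k _ _; exact: exp_coeff_ge0 z_ge0.
rewrite /series /=; apply: le_trans (sub_sum n L).
by apply: ler_sum => l _; exact: gt_bound.
Qed.

End Alg.

Lemma idx_cvg n : idx n m @[m --> \oo] --> \oo.
Proof.
have := cvg_comp _ _ (cvg_comp _ _ (cvg_subnr n) (cvg_addnr 1)) (@cvg_divnr 2 isT).
by apply.
Qed.

Lemma realC_cvg (R : realType) (u : R ^nat) (l : R) :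
  u @ \oo --> l -> (fun m => ((u m)%:C : (R[i])^o)) @ \oo --> (l%:C : (R[i])^o).
Proof.
move=> /cvgrPdist_lt H; apply/cvgrPdist_lt => e.
case: e => a b; rewrite ltcE /= => /andP[/eqP -> a0].
move: (H _ a0); apply: filterS => m hm.
rewrite complexr0 -rmorphB normc_def /= expr0n /= addr0 sqrtr_sqr ltcR.
exact: hm.
Qed.

Lemma sum_cvg (K : numFieldType) (V : normedModType K) (I : Type) (r : seq I)
  (f : I -> nat -> V) (l : I -> V) :
  (forall i, f i @ \oo --> l i) ->
  (fun m => \sum_(i <- r) f i m) @ \oo --> \sum_(i <- r) l i.
Proof.
move=> hf; elim: r => [|i r IH].
  rewrite big_nil; under eq_fun do rewrite big_nil; exact: cvg_cst.
rewrite big_cons; under eq_fun do rewrite big_cons.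
exact: cvgD.
Qed.

Theorem corollary1 (R : realType) (N : nat) (beta : nat -> R)
  (hbeta : forall s : nat, (s < N)%N -> 0 < beta s) (tau : R) :
  let A := ladderA N beta in
  let H := A + adj A in
  let Psi0 := @Psi R N ord0 in
  (forall n : nat, (n <= N)%N -> cvgn (series (gamma_term N beta n tau))) /\
  ((expv_partial H tau Psi0 : nat -> 'cV[(R[i])^o]_N.+1) @ \oo -->
     (\sum_(n < N.+1) (gamma N beta n tau)%:C *: ((- 'i *: adj A) ^+ n *m Psi0)
        : 'cV[(R[i])^o]_N.+1)).
Proof.
move=> A H Psi0.
have Psi0E : Psi0 = ev R N 0.
  by apply/matrixP => i j; rewrite !mxE (ord1 j) eqxx andbT.
split; first by move=> n _; exact: (@gamma_cvg R N beta hbeta tau n).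
have E : (expv_partial H tau Psi0 : nat -> 'cV[(R[i])^o]_N.+1) =
   (fun m => \sum_(n < N.+1) (series (gamma_term N beta n tau) (idx n m))%:C *:
     ((- 'i *: adj A) ^+ n *m Psi0)).
  by apply: funext => m; rewrite Psi0E expv_eq.
rewrite E; apply: sum_cvg => n.
apply: cvgZ; last exact: cvg_cst.
apply: realC_cvg.
exact: cvg_comp (idx_cvg n) (@gamma_cvg R N beta hbeta tau n).
Qed.
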